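(* Let $2\leq l\leq t$ be integers, let $s\geq 2$, and let $m_1,\ldots,m_s\geq 1$ be integers. Then $$\sum_{i=1}^s ex(m_i,K_{l,t})\leq ex\left(\sum_{i=1}^s m_i-s+1,\,K_{l,t}\right).$$
   Context: $ex(m,K_{l,t})$ is the maximum number of edges of a simple graph on $m$ vertices containing no copy of the complete bipartite graph $K_{l,t}$ (parts of sizes $l$ and $t$) as a subgraph. *)

(* Defs.v *)
From mathcomp Require Import all_boot.
Set Implicit Arguments. Unset Strict Implicit. Unset Printing Implicit Defensive.

Definition simple_graph (m : nat) (E : {set {set 'I_m}}) : bool :=
  [forall e in E, #|e| == 2].

Definition contains_Klt (m l t : nat) (E : {set {set 'I_m}}) : bool :=
  [exists A : {set 'I_m}, exists B : {set 'I_m},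
     [&& [disjoint A & B], #|A| == l, #|B| == t &
         [forall a in A, forall b in B, [set a; b] \in E]]].

Definition ex (m l t : nat) : nat :=
  \max_(E : {set {set 'I_m}} | simple_graph E && ~~ contains_Klt l t E) #|E|.

(* Main.v *)
Require Import Defs.
From mathcomp Require Import all_boot zify.
Set Implicit Arguments. Unset Strict Implicit. Unset Printing Implicit Defensive.

Lemma nok_set0 m l t : 0 < l -> 0 < t -> ~~ contains_Klt l t (set0 : {set {set 'I_m}}).
Proof.
move=> l0 t0; apply/negP => /existsP [A /existsP [B /and4P [_ /eqP cA /eqP cB /forallP H]]].
have /card_gt0P [a aA] : 0 < #|A| by rewrite cA.
have /card_gt0P [b bB] : 0 < #|B| by rewrite cB.
by move: (H a) => /implyP /(_ aA) /forallP /(_ b) /implyP /(_ bB); rewrite inE.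
Qed.

Lemma ex_att m l t : 0 < l -> 0 < t ->
  exists E : {set {set 'I_m}}, [/\ simple_graph E, ~~ contains_Klt l t E & ex m l t = #|E|].
Proof.
move=> l0 t0.
have P0 : (simple_graph (set0 : {set {set 'I_m}})) && ~~ contains_Klt l t (set0 : {set {set 'I_m}}).
  apply/andP; split; last exact: nok_set0. apply/forallP => e; by rewrite inE.
rewrite /ex (@bigmax_eq_arg _ set0 (fun E : {set {set 'I_m}} => simple_graph E && ~~ contains_Klt l t E) (fun E => #|E|) P0).
set E := [arg max_(_ > _ | _) _].
have : simple_graph E && ~~ contains_Klt l t E.
  rewrite /E; case: arg_maxnP => //.
by case/andP => h1 h2; exists E.
Qed.

Lemma pull k n l t (h : 'I_k -> 'I_n) (E' : {set {set 'I_k}}) (E : {set {set 'I_n}}) :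
  injective h ->
  (forall i j, i != j -> [set h i; h j] \in E -> [set i; j] \in E') ->
  forall A B : {set 'I_n}, (forall x, x \in A -> exists i, x = h i) ->
  (forall x, x \in B -> exists i, x = h i) ->
  [disjoint A & B] -> #|A| = l -> #|B| = t ->
  (forall a b, a \in A -> b \in B -> [set a; b] \in E) ->
  contains_Klt l t E'.
Proof.
move=> hi hE A B hA hB dAB cA cB hAB.
have imA : forall X : {set 'I_n}, (forall x, x \in X -> exists i, x = h i) ->
   #|[set i | h i \in X]| = #|X|.
  move=> X hX; rewrite -(card_imset _ hi); apply: eq_card => x.
  apply/imsetP/idP.
    by case=> i; rewrite inE => ? ->.
  by move=> xX; case: (hX x xX) => i ei; exists i; rewrite ?inE -?ei.
apply/existsP; exists [set i | h i \in A]; apply/existsP; exists [set i | h i \in B].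
apply/and4P; split.
- rewrite -setI_eq0; apply/eqP/setP => i; rewrite !inE; apply/negP => /andP [iA iB].
  by rewrite (disjointFr dAB iA) in iB.
- by rewrite imA // cA.
- by rewrite imA // cB.
apply/forallP => i; apply/implyP; rewrite inE => iA.
apply/forallP => j; apply/implyP; rewrite inE => jB.
apply: hE; last exact: hAB.
apply/eqP => eij; subst j.
by rewrite (disjointFr dAB iA) in jB.
Qed.

Lemma offc N (A : {set 'I_N}) c : 1 < #|A| -> exists2 x, x \in A & nat_of_ord x != c.
Proof.
move=> cA; case: (pickP [pred x in A | nat_of_ord x != c]) => [x /andP [xA ne] | none].
  by exists x.
have : #|A| <= 1.
  apply/card_le1_eqP => x y xA yA; apply: val_inj.
  move: (none x) (none y) => /=; rewrite xA yA /= => /negbFE/eqP -> /negbFE/eqP ->.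
  done.
by rewrite leqNgt cA.
Qed.

Lemma glue a' b' l t : 2 <= l -> 2 <= t -> ex a'.+1 l t + ex b'.+1 l t <= ex (a'+b').+1 l t.
Proof.
move=> l2 t2.
have l0 : 0 < l by apply: leq_trans l2.
have t0 : 0 < t by apply: leq_trans t2.
have [E1 [s1 k1 ->]] := ex_att a'.+1 l0 t0.
have [E2 [s2 k2 ->]] := ex_att b'.+1 l0 t0.
pose f := fun i : 'I_a'.+1 => (inord i : 'I_(a'+b').+1).
pose g := fun j : 'I_b'.+1 => (inord (j + a') : 'I_(a'+b').+1).
have vf : forall i, nat_of_ord (f i) = i.
  move=> i; rewrite /f inordK //; have := ltn_ord i; lia.
have vg : forall j, nat_of_ord (g j) = j + a'.
  move=> j; rewrite /g inordK //; have := ltn_ord j; lia.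
have fi : injective f by move=> i j e; apply: val_inj => /=; move: (congr1 (@nat_of_ord _) e); rewrite !vf.
have gi : injective g by move=> i j e; apply: val_inj => /=; move: (congr1 (@nat_of_ord _) e); rewrite !vg; lia.
pose Ef := [set [set f x | x in e] | e : {set 'I_a'.+1} in E1].
pose Eg := [set [set g x | x in e] | e : {set 'I_b'.+1} in E2].
have hEf : forall e x, e \in Ef -> x \in e -> nat_of_ord x <= a'.
  move=> e x /imsetP [e1 _ ->] /imsetP [i _ ->]; rewrite vf; have := ltn_ord i; lia.
have hEg : forall e x, e \in Eg -> x \in e -> a' <= nat_of_ord x.
  move=> e x /imsetP [e1 _ ->] /imsetP [i _ ->]; rewrite vg; lia.
have sEf : forall e, e \in Ef -> #|e| = 2.
  move=> e /imsetP [e1 e1E ->]; rewrite card_imset //.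
  by move/forallP: s1 => /(_ e1) /implyP /(_ e1E) /eqP.
have sEg : forall e, e \in Eg -> #|e| = 2.
  move=> e /imsetP [e1 e1E ->]; rewrite card_imset //.
  by move/forallP: s2 => /(_ e1) /implyP /(_ e1E) /eqP.
set E := Ef :|: Eg.
have cE : #|E| = #|E1| + #|E2|.
  rewrite cardsU.
  have -> : Ef :&: Eg = set0.
    apply/setP => e; rewrite !inE; apply/negP => /andP [ef eg].
    have : #|e| <= 1.
      apply/card_le1_eqP => x y xe ye; apply: val_inj => /=.
      have := hEf e x ef xe; have := hEf e y ef ye.
      have := hEg e x eg xe; have := hEg e y eg ye. lia.
    by rewrite sEf.
  rewrite cards0 subn0 /Ef /Eg !card_imset //; exact: imset_inj.
rewrite -cE.
apply: (@leq_bigmax_cond _ (fun E : {set {set 'I_(a'+b').+1}} => simple_graph E && ~~ contains_Klt l t E) (fun E => #|E|) E).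
apply/andP; split.
  apply/forallP => e; apply/implyP; rewrite inE => /orP [] h.
    by rewrite sEf.
  by rewrite sEg.
apply/negP => /existsP [A /existsP [B /and4P [dAB /eqP cA /eqP cB /forallP H]]].
have HAB : forall a b, a \in A -> b \in B -> [set a; b] \in E.
  by move=> a b aA bB; move: (H a) => /implyP /(_ aA) /forallP /(_ b) /implyP /(_ bB).
have side : forall x y, [set x; y] \in E ->
   (nat_of_ord x <= a' /\ nat_of_ord y <= a') \/ (a' <= nat_of_ord x /\ a' <= nat_of_ord y).
  move=> x y; rewrite inE => /orP [] h.
    left; split; apply: (hEf _ _ h); by rewrite !inE eqxx ?orbT.
  right; split; apply: (hEg _ _ h); by rewrite !inE eqxx ?orbT.
have [a0 a0A na0] := offc a' (leq_trans l2 (eq_leq (esym cA))).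
have [b0 b0B nb0] := offc a' (leq_trans t2 (eq_leq (esym cB))).
have pairf : forall i j, [set f i; f j] = [set f x | x in [set i; j]].
  by move=> i j; rewrite imsetU1 imset_set1.
have pairg : forall i j, [set g i; g j] = [set g x | x in [set i; j]].
  by move=> i j; rewrite imsetU1 imset_set1.
case: (ltngtP (nat_of_ord a0) a') => [lt|gt|]; last by move/eqP; rewrite (negbTE na0).
- have hB : forall b, b \in B -> nat_of_ord b <= a'.
    move=> b bB; case: (side _ _ (HAB _ _ a0A bB)); [by case | lia].
  have lb : nat_of_ord b0 < a' by have := hB _ b0B; lia.
  have hA : forall a, a \in A -> nat_of_ord a <= a'.
    move=> a aA; case: (side _ _ (HAB _ _ aA b0B)); [by case | lia].
  apply: (negP k1); apply: (@pull _ _ l t f E1 E fi _ A B) => //.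
  + move=> i j ij; rewrite pairf inE => /orP [] h.
      by move: h; rewrite /Ef (mem_imset _ _ (imset_inj fi)).
    have := hEg _ (f i) h; have := hEg _ (f j) h.
    rewrite !(mem_imset _ _ fi) !inE !eqxx /= ?orbT !vf => /(_ isT) hj /(_ isT) hi; exfalso.
    have := ltn_ord i; have := ltn_ord j.
    move/eqP: ij => ij ? ?; apply: ij; apply: val_inj => /=; lia.
  + move=> x xA; have xl : nat_of_ord x < a'.+1 by have := hA x xA; lia.
    by exists (Ordinal xl); apply: val_inj => /=; rewrite vf.
  + move=> x xB; have xl : nat_of_ord x < a'.+1 by have := hB x xB; lia.
    by exists (Ordinal xl); apply: val_inj => /=; rewrite vf.
- have hB : forall b, b \in B -> a' <= nat_of_ord b.
    move=> b bB; case: (side _ _ (HAB _ _ a0A bB)); [lia | by case].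
  have lb : a' < nat_of_ord b0 by have := hB _ b0B; lia.
  have hA : forall a, a \in A -> a' <= nat_of_ord a.
    move=> a aA; case: (side _ _ (HAB _ _ aA b0B)); [lia | by case].
  apply: (negP k2); apply: (@pull _ _ l t g E2 E gi _ A B) => //.
  + move=> i j ij; rewrite pairg inE => /orP [] h; last first.
      by move: h; rewrite /Eg (mem_imset _ _ (imset_inj gi)).
    have := hEf _ (g i) h; have := hEf _ (g j) h.
    rewrite !(mem_imset _ _ gi) !inE !eqxx /= ?orbT !vg => /(_ isT) hj /(_ isT) hi; exfalso.
    move/eqP: ij => ij; apply: ij; apply: val_inj => /=; lia.
  + move=> x xA; have xl : nat_of_ord x - a' < b'.+1 by have := ltn_ord x; lia.
    exists (Ordinal xl); apply: val_inj => /=; rewrite vg /=; have := hA x xA; lia.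
  + move=> x xB; have xl : nat_of_ord x - a' < b'.+1 by have := ltn_ord x; lia.
    exists (Ordinal xl); apply: val_inj => /=; rewrite vg /=; have := hB x xB; lia.
Qed.

Lemma sum_ge n (m : 'I_n -> nat) : (forall i, 1 <= m i) -> n <= \sum_(i < n) m i.
Proof.
move=> h; apply: (@leq_trans (\sum_(i < n) 1)).
  by rewrite big_const_ord iter_addn_0 mul1n.
by apply: leq_sum => i _; exact: h.
Qed.

Lemma gen l t : 2 <= l -> 2 <= t -> forall s (m : 'I_s.+1 -> nat), (forall i, 1 <= m i) ->
  \sum_(i < s.+1) ex (m i) l t <= ex ((\sum_(i < s.+1) m i) - s.+1 + 1) l t.
Proof.
move=> l2 t2; elim=> [|s IH] m hm.
  rewrite !big_ord_recr /= !big_ord0 !add0n.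
  have -> : m ord_max - 1 + 1 = m ord_max by have := hm ord_max; lia.
  done.
rewrite big_ord_recr [\sum_(i < s.+2) m i]big_ord_recr /=.
set M := \sum_(i < s.+1) m (widen_ord _ i).
have hM : s.+1 <= M by apply: sum_ge.
have := IH (fun i => m (widen_ord (leqnSn s.+1) i)) (fun i => hm _).
rewrite -/M => H.
apply: leq_trans (leq_add H (leqnn _)) _.
have hl := hm ord_max.
have e1 : M - s.+1 + 1 = (M - s.+1).+1 by lia.
have e2 : m ord_max = (m ord_max - 1).+1 by lia.
have e3 : M + m ord_max - s.+2 + 1 = ((M - s.+1) + (m ord_max - 1)).+1 by lia.
rewrite e1 e3 {1}e2; exact: glue.
Qed.

Theorem lemma2p6 (l t s : nat) (m : 'I_s -> nat) :
  2 <= l -> l <= t -> 2 <= s -> (forall i, 1 <= m i) ->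
  \sum_(i < s) ex (m i) l t <= ex ((\sum_(i < s) m i) - s + 1) l t.
Proof.
move=> l2 lt; case: s m => [|s] m s2 hm; first by [].
apply: gen => //; exact: leq_trans lt.
Qed.
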